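(* Let $\mathcal{H}$ be a complex separable Hilbert space, $A\in\mathcal{B}(\mathcal{H})$ and $\mathcal{G}\subset\mathcal{H}$ a countable Bessel system. Suppose that there is $C>0$ with $\sum_{g\in\mathcal{G}}\int_0^\infty|\langle f,e^{tA}g\rangle|^2dt\le C\|f\|^2$ for all $f\in\mathcal{H}$, and that for some $0<L<\infty$ the system $\{e^{tA}g\}_{g\in\mathcal{G},\,t\in[0,L]}$ is a semi-continuous frame for $\mathcal{H}$. Then $\{e^{tA}\}_{t\ge0}$ is exponentially stable.
   Context: For $A\in\mathcal{B}(\mathcal{H})$, $e^{tA}:=\sum_{n\ge0}\frac{t^n}{n!}A^n$. The semigroup $\{e^{tA}\}_{t\ge0}$ is exponentially stable if there are constants $M\ge1$ and $\omega<0$ with $\|e^{tA}\|\le Me^{\omega t}$ for all $t\ge0$. A countable family $\{f_k\}\subset\mathcal{H}$ is a Bessel system if there is $C>0$ with $\sum_k|\langle f,f_k\rangle|^2\le C\|f\|^2$ for all $f\in\mathcal{H}$. For a countable $\mathcal{G}\subset\mathcal{H}$ and an interval $\mathcal{T}\subset[0,\infty)$, $\{e^{tA}g\}_{g\in\mathcal{G},t\in\mathcal{T}}$ is a semi-continuous frame for $\mathcal{H}$ if there are constants $c,C>0$ such that $c\|f\|^2\le\sum_{g\in\mathcal{G}}\int_{\mathcal{T}}|\langle f,e^{tA}g\rangle|^2\,dt\le C\|f\|^2$ for all $f\in\mathcal{H}$. *)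

(* Defs.v *)
From HB Require Import structures.
From mathcomp Require Import all_boot all_order all_algebra.
From mathcomp Require Import all_classical all_reals all_analysis.
From mathcomp Require Import complex.
Set Implicit Arguments. Unset Strict Implicit. Unset Printing Implicit Defensive.
Import Order.TTheory GRing.Theory Num.Theory.
Local Open Scope ring_scope.
Local Open Scope classical_set_scope.
Local Open Scope complex_scope.

Section HilbertDefs.
Variable R : realType.
Variable V : lmodType R[i].
(* ip : the inner product, linear in the first argument *)
Variable ip : V -> V -> R[i].

Definition cabs2 (z : R[i]) : R := complex.Re z ^+ 2 + complex.Im z ^+ 2.

Definition hnorm (x : V) : R := Num.sqrt (complex.Re (ip x x)).

Definition is_inner_product : Prop :=
  [/\ (forall (a : R[i]) (x y z : V), ip (a *: x + y) z = a * ip x z + ip y z),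
      (forall x y : V, ip y x = (ip x y)^*),
      (forall x : V, 0 <= complex.Re (ip x x)) &
      (forall x : V, ip x x = 0 -> x = 0)].

Definition hcvg_to (u : nat -> V) (l : V) : Prop :=
  forall e : R, 0 < e -> exists N : nat, forall n : nat, (N <= n)%N -> hnorm (u n - l) < e.

Definition hcauchy (u : nat -> V) : Prop :=
  forall e : R, 0 < e -> exists N : nat, forall m n : nat,
    (N <= m)%N -> (N <= n)%N -> hnorm (u m - u n) < e.

Definition hcomplete : Prop :=
  forall u : nat -> V, hcauchy u -> exists l : V, hcvg_to u l.

Definition hseparable : Prop :=
  exists D : nat -> V, forall (x : V) (e : R), 0 < e -> exists k : nat, hnorm (x - D k) < e.

Definition complex_separable_hilbert : Prop :=
  [/\ is_inner_product, hcomplete & hseparable].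

Definition bounded_operator (A : V -> V) : Prop :=
  (forall (a : R[i]) (x y : V), A (a *: x + y) = a *: A x + A y) /\
  exists K : R, forall x : V, hnorm (A x) <= K * hnorm x.

Definition is_operator_exp (A : V -> V) (E : R -> V -> V) : Prop :=
  forall (t : R) (f : V),
    hcvg_to (fun N => \sum_(k < N) ((t ^+ k / (k`!)%:R)%:C *: iter k A f)) (E t f).

Definition bessel_system (G : set V) : Prop :=
  exists C : R, 0 < C /\ forall f : V,
    (\esum_(g in G) (cabs2 (ip f g))%:E <= (C * hnorm f ^+ 2)%:E)%E.

Definition semi_continuous_frame (E : R -> V -> V) (G : set V) (T : set R) : Prop :=
  exists c C : R, [/\ 0 < c, 0 < C & forall f : V,
    ((c * hnorm f ^+ 2)%:E <=
       \esum_(g in G) \int[lebesgue_measure]_(t in T) (cabs2 (ip f (E t g)))%:E)%E /\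
    (\esum_(g in G) \int[lebesgue_measure]_(t in T) (cabs2 (ip f (E t g)))%:E <=
       (C * hnorm f ^+ 2)%:E)%E].

(* exponential stability: ||E t|| <= M e^{w t}, operator norm bound written pointwise *)
Definition exponentially_stable (E : R -> V -> V) : Prop :=
  exists M w : R, [/\ 1 <= M, w < 0 &
    forall t : R, 0 <= t -> forall f : V, hnorm (E t f) <= M * expR (w * t) * hnorm f].

End HilbertDefs.

(* Main.v *)
Require Import Defs.
From HB Require Import structures.
From mathcomp Require Import all_boot all_order all_algebra.
From mathcomp Require Import all_classical all_reals all_analysis.
From mathcomp Require Import complex.
From mathcomp Require Import ring lra.
From mathcomp Require Import measurable_realfun.
Set Implicit Arguments. Unset Strict Implicit. Unset Printing Implicit Defensive.
Import Order.TTheory GRing.Theory Num.Theory.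
Import numFieldNormedType.Exports.
Local Open Scope ring_scope.
Local Open Scope classical_set_scope.
Local Open Scope complex_scope.

Section Hilbert.
Variable R : realType.
Variable V : lmodType R[i].
Variable ip : V -> V -> R[i].
Hypothesis Hip : is_inner_product ip.

Local Notation hn := (hnorm ip).
Definition n2 (x : V) : R := complex.Re (ip x x).
Definition cnorm (a : R[i]) : R := Num.sqrt (cabs2 a).

Lemma ipLin a x y z : ip (a *: x + y) z = a * ip x z + ip y z.
Proof. by case: Hip => h _ _ _; apply: h. Qed.
Lemma ipC x y : ip y x = conjc (ip x y). Proof. by case: Hip => _ h _ _; apply: h. Qed.
Lemma n2_ge0 x : 0 <= n2 x. Proof. by case: Hip => _ _ h _; apply: h. Qed.
Lemma ip_def x : ip x x = 0 -> x = 0. Proof. by case: Hip => _ _ _ h; apply: h. Qed.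

Lemma ip0l z : ip 0 z = 0.
Proof.
have := ipLin 1 0 0 z; rewrite scaler0 addr0 mul1r => h.
by have := congr1 (fun w => w - ip 0 z) h; rewrite subrr addrK.
Qed.
Lemma ipDl x y z : ip (x + y) z = ip x z + ip y z.
Proof. by rewrite -[x]scale1r ipLin mul1r scale1r. Qed.
Lemma ipZl a x z : ip (a *: x) z = a * ip x z.
Proof. by rewrite -[a *: x]addr0 ipLin ip0l addr0. Qed.
Lemma ipNl x z : ip (- x) z = - ip x z.
Proof. by rewrite -scaleN1r ipZl mulN1r. Qed.
Lemma ipBl x y z : ip (x - y) z = ip x z - ip y z.
Proof. by rewrite ipDl ipNl. Qed.

Lemma conjcD (a b : R[i]) : conjc (a + b) = conjc a + conjc b.
Proof. by case: a => ? ?; case: b => ? ?; simpc. Qed.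
Lemma conjcM (a b : R[i]) : conjc (a * b) = conjc a * conjc b.
Proof. by case: a => ? ?; case: b => ? ?; simpc; simpl; congr Complex; ring. Qed.
Lemma conjcN (a : R[i]) : conjc (- a) = - conjc a.
Proof. by case: a => ? ?; simpc. Qed.
Lemma conjcK' (a : R[i]) : conjc (conjc a) = a.
Proof. by case: a => ? ? /=; rewrite opprK. Qed.
Lemma conjc0' : conjc (0 : R[i]) = 0.
Proof. by rewrite /conjc /= oppr0. Qed.

Lemma ipDr z x y : ip z (x + y) = ip z x + ip z y.
Proof. by rewrite ipC ipDl conjcD -!ipC. Qed.
Lemma ipZr z a x : ip z (a *: x) = conjc a * ip z x.
Proof. by rewrite ipC ipZl conjcM -ipC. Qed.
Lemma ip0r z : ip z 0 = 0.
Proof. by rewrite ipC ip0l conjc0'. Qed.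
Lemma ipNr z x : ip z (- x) = - ip z x.
Proof. by rewrite ipC ipNl conjcN -ipC. Qed.
Lemma ipBr z x y : ip z (x - y) = ip z x - ip z y.
Proof. by rewrite ipDr ipNr. Qed.

Lemma Im_ipxx x : complex.Im (ip x x) = 0.
Proof.
have := ipC x x; case: (ip x x) => a b /= [] h.
lra.
Qed.
Lemma ipxx x : ip x x = (n2 x)%:C.
Proof. rewrite /n2; case E: (ip x x) => [a b]; have := Im_ipxx x; rewrite E /= => ->. by []. Qed.

Lemma hn_ge0 x : 0 <= hn x. Proof. exact: sqrtr_ge0. Qed.
Lemma hn_sqr x : hn x ^+ 2 = n2 x. Proof. by rewrite /hnorm sqr_sqrtr // n2_ge0. Qed.
Lemma hnE x : hn x = Num.sqrt (n2 x). Proof. by []. Qed.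

Lemma n2_eq0 x : n2 x = 0 -> x = 0.
Proof. by move=> h; apply: ip_def; rewrite ipxx h. Qed.
Lemma hn_eq0 x : hn x = 0 -> x = 0.
Proof. by move=> h; apply: n2_eq0; rewrite -hn_sqr h expr0n. Qed.
Lemma n20 : n2 0 = 0. Proof. by rewrite /n2 ip0l. Qed.
Lemma hn0 : hn 0 = 0. Proof. by rewrite hnE n20 sqrtr0. Qed.

Lemma ReJ (z : R[i]) : complex.Re (conjc z) = complex.Re z.
Proof. by case: z. Qed.

Lemma n2D x y : n2 (x + y) = n2 x + n2 y + 2 * complex.Re (ip x y).
Proof.
rewrite /n2 ipDl !ipDr [ip y x]ipC.
case: (ip x y) => a b; case: (ip x x) => ? ?; case: (ip y y) => ? ? /=.
ring.
Qed.

Lemma cabs2_ge0 (z : R[i]) : 0 <= cabs2 z.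
Proof. by rewrite /cabs2; apply: addr_ge0; apply: sqr_ge0. Qed.

Lemma n2Z a x : n2 (a *: x) = cabs2 a * n2 x.
Proof.
rewrite /n2 ipZl ipZr ipxx /cabs2; case: a => p q /=.
ring.
Qed.

Lemma hnZ a x : hn (a *: x) = cnorm a * hn x.
Proof. by rewrite !hnE n2Z sqrtrM // cabs2_ge0. Qed.

Lemma cnormR (r : R) : cnorm r%:C = `|r|.
Proof. by rewrite /cnorm /cabs2 /= expr0n /= addr0 sqrtr_sqr. Qed.

Lemma hnZR (r : R) x : hn (r%:C *: x) = `|r| * hn x.
Proof. by rewrite hnZ cnormR. Qed.

Lemma hnN x : hn (- x) = hn x.
Proof. by rewrite -scaleN1r hnZ /cnorm /cabs2 /= oppr0 expr0n /= addr0 sqrrN expr1n sqrtr1 mul1r. Qed.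

Lemma hnB x y : hn (x - y) = hn (y - x).
Proof. by rewrite -hnN opprB. Qed.

Lemma n2B_gen x y b : n2 (x - b *: y) =
  n2 x - 2 * complex.Re (conjc b * ip x y) + cabs2 b * n2 y.
Proof.
rewrite /n2 ipBl !ipBr !ipZl !ipZr [ip y x]ipC !ipxx /cabs2.
case: b => p q; case: (ip x y) => a c /=.
ring.
Qed.

Lemma CS x y : cabs2 (ip x y) <= n2 x * n2 y.
Proof.
have [y0|ny] := eqVneq (n2 y) 0.
  by rewrite (n2_eq0 y0) ip0r n20 mulr0 /cabs2 /= expr0n /= addr0 lexx.
have py : 0 < n2 y by rewrite lt_def ny n2_ge0.
set z := ip x y.
have := n2_ge0 (x - ((n2 y)^-1%:C * z) *: y).
rewrite n2B_gen -/z.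
have -> : cabs2 ((n2 y)^-1%:C * z) = (n2 y)^-2 * cabs2 z.
  rewrite /cabs2; case: z => p q /=; rewrite !mul0r !subr0 !addr0; by rewrite !exprMn -mulrDr exprVn.
have -> : complex.Re (conjc ((n2 y)^-1%:C * z) * z) = (n2 y)^-1 * cabs2 z.
  rewrite /cabs2; case: z => p q /=; rewrite !mul0r !subr0 !addr0; ring.
move=> h.
have h2 : 0 <= n2 x * n2 y - cabs2 z.
  have -> : n2 x * n2 y - cabs2 z =
     n2 y * (n2 x - 2 * ((n2 y)^-1 * cabs2 z) + (n2 y)^-2 * cabs2 z * n2 y).
    field. by rewrite ny.
  by apply: mulr_ge0 => //; apply: ltW.
lra.
Qed.

Lemma Re_le_cnorm (z : R[i]) : complex.Re z <= cnorm z.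
Proof.
rewrite /cnorm; apply: le_trans (ler_norm _) _.
rewrite -sqrtr_sqr; apply: ler_wsqrtr.
rewrite /cabs2; have := sqr_ge0 (complex.Im z); lra.
Qed.
Lemma cnorm_ge0 (z : R[i]) : 0 <= cnorm z. Proof. exact: sqrtr_ge0. Qed.

Lemma cnorm_ip x y : cnorm (ip x y) <= hn x * hn y.
Proof.
rewrite /cnorm !hnE -sqrtrM ?n2_ge0 //; apply: ler_wsqrtr; exact: CS.
Qed.

Lemma Re_ip_le x y : complex.Re (ip x y) <= hn x * hn y.
Proof. exact: le_trans (Re_le_cnorm _) (cnorm_ip x y). Qed.

Lemma hnD x y : hn (x + y) <= hn x + hn y.
Proof.
rewrite hnE -[hn x + hn y]ger0_norm ?addr_ge0 ?hn_ge0 //.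
rewrite -sqrtr_sqr; apply: ler_wsqrtr.
rewrite n2D sqrrD !hn_sqr.
have := Re_ip_le x y; lra.
Qed.

Lemma hn_sum (I : Type) (s : seq I) (F : I -> V) :
  hn (\sum_(i <- s) F i) <= \sum_(i <- s) hn (F i).
Proof.
elim: s => [|a s IH]; first by rewrite !big_nil hn0.
rewrite !big_cons; apply: le_trans (hnD _ _) _; exact: lerD.
Qed.

Lemma hn_tri x y z : hn (x - z) <= hn (x - y) + hn (y - z).
Proof. have -> : x - z = (x - y) + (y - z) by rewrite addrA subrK. exact: hnD. Qed.

End Hilbert.
Local Open Scope complex_scope.

Lemma le0_all (R : realType) (x : R) : (forall e, 0 < e -> x <= e) -> x <= 0.
Proof.
move=> h; case: (ltP 0 x) => // x0.
have := h (x / 2) (divr_gt0 x0 (ltr0Sn _ 1)); lra.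
Qed.

Lemma cvg_eps (R : realType) (u : nat -> R) (l : R) : u @ \oo --> l ->
  forall e : R, 0 < e -> exists N : nat, forall n, (N <= n)%N -> `|u n - l| < e.
Proof.
move=> /cvgrPdist_lt h e e0; have [N _ HN] := h e e0.
by exists N => n Nn; rewrite distrC; exact: HN.
Qed.

Lemma eps_cvg (R : realType) (u : nat -> R) (l : R) :
  (forall e : R, 0 < e -> exists N : nat, forall n, (N <= n)%N -> `|u n - l| < e) ->
  u @ \oo --> l.
Proof.
move=> h; apply/cvgrPdist_lt => e e0; have [N HN] := h e e0.
by exists N => // n /= Nn; rewrite distrC; exact: HN.
Qed.

Lemma cvg_scal (R : realType) (u : nat -> R) (c l : R) :
  u @ \oo --> l -> (fun n => c * u n) @ \oo --> c * l.
Proof. move=> h; exact: (@cvgMl_tmp _ _ _ _ u c l h). Qed.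

Lemma cvg_add (R : realType) (u v : nat -> R) (l m : R) :
  u @ \oo --> l -> v @ \oo --> m -> (fun n => u n + v n) @ \oo --> l + m.
Proof. move=> h1 h2; exact: (cvgD h1 h2). Qed.

Lemma triangle_sum (W : zmodType) (H : nat -> nat -> W) (N : nat) :
  \sum_(n < N) \sum_(j < n.+1) H j (n - j)%N =
  \sum_(j < N) \sum_(k < (N - j)%N) H j k.
Proof.
elim: N => [|N IH]; first by rewrite !big_ord0.
rewrite big_ord_recr /= IH.
have -> : \sum_(j < N.+1) \sum_(k < (N.+1 - j)%N) H j k =
  \sum_(j < N.+1) (\sum_(k < (N - j)%N) H j k + H j (N - j)%N).
  apply: eq_bigr => j _.
  have jN : (j <= N)%N by rewrite -ltnS.
  by rewrite subSn // big_ord_recr.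
rewrite big_split /=; congr (_ + _).
by rewrite big_ord_recr /= subnn big_ord0 addr0.
Qed.

Section Conv.
Variable R : realType.
Variable V : lmodType R[i].
Variable ip : V -> V -> R[i].
Hypothesis Hip : is_inner_product ip.
Local Notation hn := (hnorm ip).

Lemma hcvgP (u : nat -> V) l : hcvg_to ip u l <-> (fun n => hn (u n - l)) @ \oo --> (0:R).
Proof.
split => h.
  apply: eps_cvg => e e0; have [N HN] := h e e0; exists N => n Nn.
  by rewrite subr0 ger0_norm ?hn_ge0 //; exact: HN.
move=> e e0; have [N HN] := cvg_eps h e0; exists N => n Nn.
by have := HN n Nn; rewrite subr0 ger0_norm ?hn_ge0.
Qed.

Lemma hcvg_bound (v : nat -> V) m (a : nat -> R) :
  (forall n, hn (v n - m) <= a n) -> a @ \oo --> (0:R) -> hcvg_to ip v m.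
Proof.
move=> hb ha e e0; have [N HN] := cvg_eps ha e0; exists N => n Nn.
apply: le_lt_trans (hb n) _; have := HN n Nn; rewrite subr0.
by apply: le_lt_trans; exact: ler_norm.
Qed.

Lemma hcvg_unique (u : nat -> V) l l' : hcvg_to ip u l -> hcvg_to ip u l' -> l = l'.
Proof.
move=> h1 h2; apply/eqP; rewrite -subr_eq0; apply/eqP; apply: (hn_eq0 Hip); apply/eqP; rewrite eq_le hn_ge0 andbT.
apply: le0_all => e e0.
have e2 : 0 < e / 2 by apply: divr_gt0.
have [N1 H1] := h1 _ e2; have [N2 H2] := h2 _ e2.
have := H1 (maxn N1 N2) (leq_maxl _ _); have := H2 (maxn N1 N2) (leq_maxr _ _).
rewrite (hnB Hip _ l) => a b.
have := hn_tri Hip l (u (maxn N1 N2)) l'; lra.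
Qed.

Lemma hcvg_hn_le (u : nat -> V) l (B : R) :
  hcvg_to ip u l -> (forall n, hn (u n) <= B) -> hn l <= B.
Proof.
move=> h hb; rewrite -subr_le0; apply: le0_all => e e0.
have [N HN] := h e e0; have := HN N (leqnn N); have := hb N.
have := hnD Hip (u N) (l - u N); rewrite addrC subrK (hnB Hip _ l); lra.
Qed.

Lemma hcvg_lin (u v : nat -> V) l m (a : R[i]) :
  hcvg_to ip u l -> hcvg_to ip v m ->
  hcvg_to ip (fun n => a *: u n + v n) (a *: l + m).
Proof.
move=> /hcvgP hu /hcvgP hv.
apply: (hcvg_bound (a := fun n => cnorm a * hn (u n - l) + hn (v n - m))).
  move=> n; have -> : a *: u n + v n - (a *: l + m) = a *: (u n - l) + (v n - m).
    by rewrite scalerBr addrACA opprD.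
  by apply: le_trans (hnD Hip _ _) _; rewrite (hnZ Hip).
have h := cvg_add (cvg_scal (c := cnorm a) hu) hv.
by rewrite mulr0 addr0 in h.
Qed.

End Conv.
Local Open Scope complex_scope.

Definition ec (R : realType) (t : R) (k : nat) : R := t ^+ k / (k`!)%:R.

Lemma ec_exp (R : realType) (x : R) k : ec x k = exp_coeff x k.
Proof. by rewrite /ec exp_coeffE /= mulrC. Qed.

Lemma ec0 (R : realType) (t : R) : ec t 0 = 1.
Proof. by rewrite /ec expr0 fact0 divr1. Qed.

Lemma fact_neq0 (R : realType) k : (k`!)%:R != 0 :> R.
Proof. by rewrite pnatr_eq0 -lt0n fact_gt0. Qed.

Lemma ec_abs (R : realType) (t : R) k : `|ec t k| = ec `|t| k.
Proof. by rewrite /ec normrM normrX normfV normr_nat. Qed.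

Lemma ec_ge0 (R : realType) (t : R) k : 0 <= t -> 0 <= ec t k.
Proof. by move=> t0; rewrite /ec mulr_ge0 // ?exprn_ge0 // invr_ge0 ler0n. Qed.

Lemma ecM (R : realType) (t c : R) k : ec t k * c ^+ k = ec (t * c) k.
Proof. by rewrite /ec exprMn mulrAC. Qed.

Lemma ec_binom (R : realType) (a b : R) n :
  ec (a + b) n = \sum_(j < n.+1) ec a j * ec b (n - j).
Proof.
rewrite /ec addrC exprDn mulr_suml; apply: eq_bigr => j _.
have jn : (j <= n)%N by rewrite -ltnS.
have hf := bin_fact jn.
have -> : (n`!)%:R = ('C(n, j))%:R * (j`!)%:R * ((n - j)`!)%:R :> R.
  by rewrite -!natrM -hf mulnA.
have c0 : ('C(n, j))%:R != 0 :> R by rewrite pnatr_eq0 -lt0n bin_gt0.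
have f1 := fact_neq0 R j; have f2 := fact_neq0 R (n - j).
rewrite -mulr_natr; field.
by rewrite c0 f1 f2.
Qed.

Lemma series_ord (R : realType) (u : nat -> R) N : series u N = \sum_(k < N) u k.
Proof. by rewrite /series /= big_mkord. Qed.

Lemma exp_series_le (R : realType) (x : R) n : 0 <= x -> series (exp_coeff x) n <= expR x.
Proof.
move=> x0; apply: nondecreasing_cvgn_le; last exact: is_cvg_series_exp_coeff.
by apply: nondecreasing_series => k _ _; apply: exp_coeff_ge0.
Qed.

Lemma exp_series_cvg (R : realType) (x : R) : series (exp_coeff x) @ \oo --> expR x.
Proof. exact: is_cvg_series_exp_coeff. Qed.

Lemma RCM (R : realType) (x y : R) : (x * y)%:C = x%:C * y%:C :> R[i].
Proof. by rewrite rmorphM. Qed.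
Lemma RCS (R : realType) (I : Type) (s : seq I) (F : I -> R) :
  (\sum_(i <- s) F i)%:C = \sum_(i <- s) (F i)%:C :> R[i].
Proof. by rewrite rmorph_sum. Qed.

Lemma square_minus_triangle (W : zmodType) (H : nat -> nat -> W) (N : nat) :
  \sum_(j < N) \sum_(k < N) H j k - \sum_(n < N) \sum_(j < n.+1) H j (n - j)%N =
  \sum_(j < N) \sum_(N - j <= k < N) H j k.
Proof.
rewrite triangle_sum -sumrB; apply: eq_bigr => j _.
rewrite -!(big_mkord xpredT) (@big_cat_nat _ _ _ (N - j)%N 0 N) //= ?leq_subr //.
by rewrite addrC addrK.
Qed.

Lemma hcvg_hn_le_ev (R : realType) (V : lmodType R[i]) (ip : V -> V -> R[i])
  (Hip : is_inner_product ip) (u : nat -> V) l (B : R) (N0 : nat) :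
  hcvg_to ip u l -> (forall n, (N0 <= n)%N -> hnorm ip (u n) <= B) -> hnorm ip l <= B.
Proof.
move=> h hb; rewrite -subr_le0; apply: le0_all => e e0.
have [N HN] := h e e0; have := HN (maxn N N0) (leq_maxl _ _); have := hb (maxn N N0) (leq_maxr _ _).
have := hnD Hip (u (maxn N N0)) (l - u (maxn N N0)); rewrite addrC subrK (hnB Hip _ l); lra.
Qed.

Section Exp.
Variable R : realType.
Variable V : lmodType R[i].
Variable ip : V -> V -> R[i].
Hypothesis Hip : is_inner_product ip.
Local Notation hn := (hnorm ip).
Variable A : V -> V.
Variable K : R.
Hypothesis K0 : 0 <= K.
Hypothesis HK : forall x, hn (A x) <= K * hn x.
Hypothesis Alin : forall a x y, A (a *: x + y) = a *: A x + A y.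
Variable E : R -> V -> V.
Hypothesis HE : is_operator_exp ip A E.

Lemma A0 : A 0 = 0.
Proof.
have := Alin 1 0 0; rewrite scaler0 addr0 scale1r => h.
by have := congr1 (fun w => w - A 0) h; rewrite subrr addrK.
Qed.
Lemma AZ a x : A (a *: x) = a *: A x.
Proof. by rewrite -[a *: x]addr0 Alin A0 addr0. Qed.
Lemma AD x y : A (x + y) = A x + A y.
Proof. by rewrite -[x]scale1r Alin !scale1r. Qed.

Lemma iterZ k a x : iter k A (a *: x) = a *: iter k A x.
Proof. by elim: k => [|k IH] //=; rewrite IH AZ. Qed.
Lemma iterDl k x y : iter k A (x + y) = iter k A x + iter k A y.
Proof. by elim: k => [|k IH] //=; rewrite IH AD. Qed.
Lemma iter0 k : iter k A 0 = 0.
Proof. by elim: k => [|k IH] //=; rewrite IH A0. Qed.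
Lemma iterN k x : iter k A (- x) = - iter k A x.
Proof. by rewrite -scaleN1r iterZ scaleN1r. Qed.
Lemma iterB k x y : iter k A (x - y) = iter k A x - iter k A y.
Proof. by rewrite iterDl iterN. Qed.
Lemma iter_sum k (I : Type) (s : seq I) (F : I -> V) :
  iter k A (\sum_(i <- s) F i) = \sum_(i <- s) iter k A (F i).
Proof.
elim: s => [|a s IH]; first by rewrite !big_nil iter0.
by rewrite !big_cons iterDl IH.
Qed.
Lemma iter_bound k x : hn (iter k A x) <= K ^+ k * hn x.
Proof.
elim: k => [|k IH] /=; first by rewrite expr0 mul1r.
apply: le_trans (HK _) _; rewrite exprS -mulrA; exact: ler_wpM2l.
Qed.

Definition S t N f := \sum_(k < N) ((ec t k)%:C *: iter k A f).
Lemma HS t f : hcvg_to ip (fun N => S t N f) (E t f).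
Proof. exact: HE. Qed.

Lemma S_lin t N a x y : S t N (a *: x + y) = a *: S t N x + S t N y.
Proof.
rewrite /S scaler_sumr -big_split; apply: eq_bigr => k _.
by rewrite iterDl iterZ scalerDr !scalerA mulrC.
Qed.

Lemma E_lin t a x y : E t (a *: x + y) = a *: E t x + E t y.
Proof.
apply: (hcvg_unique Hip (HS t (a *: x + y))).
have -> : (fun N => S t N (a *: x + y)) = fun N => a *: S t N x + S t N y.
  by apply: funext => N; exact: S_lin.
by apply: (hcvg_lin Hip); exact: HS.
Qed.
Lemma E0 t : E t 0 = 0.
Proof.
have := E_lin t 1 0 0; rewrite scaler0 addr0 scale1r => h.
by have := congr1 (fun w => w - E t 0) h; rewrite subrr addrK.
Qed.
Lemma EZ t a x : E t (a *: x) = a *: E t x.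
Proof. by rewrite -[a *: x]addr0 E_lin E0 addr0. Qed.
Lemma ED t x y : E t (x + y) = E t x + E t y.
Proof. by rewrite -[x]scale1r E_lin !scale1r. Qed.
Lemma EB t x y : E t (x - y) = E t x - E t y.
Proof. by rewrite ED -scaleN1r EZ scaleN1r. Qed.

Lemma term_bound (t : R) k x :
  hn ((ec t k)%:C *: iter k A x) <= exp_coeff (`|t| * K) k * hn x.
Proof.
rewrite (hnZR Hip) ec_abs -ec_exp -ecM -mulrA; apply: ler_wpM2l.
  exact: ec_ge0.
exact: iter_bound.
Qed.

Lemma S_bound t N f : hn (S t N f) <= series (exp_coeff (`|t| * K)) N * hn f.
Proof.
apply: le_trans (hn_sum Hip _ _) _.
rewrite series_ord mulr_suml; apply: ler_sum => k _; exact: term_bound.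
Qed.

Lemma tK_ge0 (t : R) : 0 <= `|t| * K.
Proof. by apply: mulr_ge0. Qed.

Lemma E_bound t f : hn (E t f) <= expR (`|t| * K) * hn f.
Proof.
apply: (hcvg_hn_le Hip (HS t f)) => N.
apply: le_trans (S_bound t N f) _; apply: ler_wpM2r; first exact: hn_ge0.
exact: exp_series_le (tK_ge0 t).
Qed.

Lemma E_sub_id t f : hn (E t f - f) <= (expR (`|t| * K) - 1) * hn f.
Proof.
have hc : hcvg_to ip (fun N => 1 *: S t N f + (- f)) (1 *: E t f + (- f)).
  apply: (hcvg_lin Hip); first exact: HS.
  by move=> e e0; exists 0%N => n _; rewrite subrr hn0.
rewrite scale1r in hc.
apply: (hcvg_hn_le_ev Hip hc (N0 := 1%N)) => n n1.
rewrite scale1r.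
case: n n1 => // M _.
rewrite /S big_ord_recl /= ec0 scale1r addrAC subrr add0r.
apply: le_trans (hn_sum Hip _ _) _.
apply: (@le_trans _ _ ((series (exp_coeff (`|t| * K)) M.+1 - 1) * hn f)).
  rewrite series_ord big_ord_recl /= -ec_exp ec0 addrAC subrr add0r mulr_suml.
  apply: ler_sum => k _; rewrite /bump leq0n add1n add0n; exact: (term_bound t k.+1 f).
apply: ler_wpM2r; first exact: hn_ge0.
by apply: lerB => //; exact: exp_series_le (tK_ge0 t).
Qed.

End Exp.
Local Open Scope complex_scope.

Lemma cvg_scalr (R : realType) (u : nat -> R) (c l : R) :
  u @ \oo --> l -> (fun n => u n * c) @ \oo --> l * c.
Proof. move=> h; exact: (@cvgMr_tmp _ _ _ _ u l c h). Qed.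
Lemma cvg_mul (R : realType) (u v : nat -> R) (l m : R) :
  u @ \oo --> l -> v @ \oo --> m -> (fun n => u n * v n) @ \oo --> l * m.
Proof. move=> h1 h2; exact: (cvgM h1 h2). Qed.
Lemma cvg_sub (R : realType) (u v : nat -> R) (l m : R) :
  u @ \oo --> l -> v @ \oo --> m -> (fun n => u n - v n) @ \oo --> l - m.
Proof. move=> h1 h2; exact: (cvgB h1 h2). Qed.

Section Semi.
Variable R : realType.
Variable V : lmodType R[i].
Variable ip : V -> V -> R[i].
Hypothesis Hip : is_inner_product ip.
Local Notation hn := (hnorm ip).
Variable A : V -> V.
Variable K : R.
Hypothesis K0 : 0 <= K.
Hypothesis HK : forall x, hn (A x) <= K * hn x.
Hypothesis Alin : forall a x y, A (a *: x + y) = a *: A x + A y.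
Variable E : R -> V -> V.
Hypothesis HE : is_operator_exp ip A E.

Definition Hjk (a b : R) (f : V) (j k : nat) : V :=
  (ec a j * ec b k)%:C *: iter (j + k) A f.

Lemma D_expand a b f N :
  \sum_(j < N) (ec a j)%:C *: iter j A (S A b N f) =
  \sum_(j < N) \sum_(k < N) Hjk a b f j k.
Proof.
apply: eq_bigr => j _; rewrite /S (iter_sum Alin) scaler_sumr.
apply: eq_bigr => k _; rewrite (iterZ Alin) scalerA -RCM /Hjk iterD //.
Qed.

Lemma C_expand a b f N :
  S A (a + b) N f = \sum_(n < N) \sum_(j < n.+1) Hjk a b f j (n - j)%N.
Proof.
rewrite /S; apply: eq_bigr => n _; rewrite ec_binom rmorph_sum scaler_suml.
apply: eq_bigr => j _; rewrite /Hjk subnKC // -ltnS //.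
Qed.

Lemma Hjk_bound a b f j k :
  hn (Hjk a b f j k) <= ec (`|a| * K) j * ec (`|b| * K) k * hn f.
Proof.
rewrite /Hjk (hnZR Hip) normrM !ec_abs -!ecM.
have -> : ec `|a| j * K ^+ j * (ec `|b| k * K ^+ k) * hn f =
   ec `|a| j * ec `|b| k * (K ^+ (j + k) * hn f) by rewrite exprD; ring.
apply: ler_wpM2l; first by apply: mulr_ge0; apply: ec_ge0.
exact: iter_bound.
Qed.

Lemma tail_real (p q : R) N :
  \sum_(j < N) \sum_(N - j <= k < N) ec p j * ec q k =
  series (exp_coeff p) N * series (exp_coeff q) N - series (exp_coeff (p + q)) N.
Proof.
rewrite -(square_minus_triangle (fun j k => ec p j * ec q k)) !series_ord.
rewrite mulr_suml; congr (_ - _).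
  apply: eq_bigr => j _; rewrite mulr_sumr -ec_exp; apply: eq_bigr => k _; by rewrite -ec_exp.
by apply: eq_bigr => n _; rewrite -ec_exp ec_binom.
Qed.

Lemma E_semigroup a b f : E (a + b) f = E a (E b f).
Proof.
set p := `|a| * K; set q := `|b| * K; set L := E a (E b f).
pose X N := \sum_(j < N) (ec a j)%:C *: iter j A (E b f).
pose D N := \sum_(j < N) (ec a j)%:C *: iter j A (S A b N f).
have hX : hcvg_to ip X L := HE a (E b f).
have hDX N : hn (D N - X N) <= expR p * hn (S A b N f - E b f).
  rewrite /D /X -sumrB.
  have -> : \sum_(j < N) ((ec a j)%:C *: iter j A (S A b N f) -
              (ec a j)%:C *: iter j A (E b f)) =
            \sum_(j < N) (ec a j)%:C *: iter j A (S A b N f - E b f).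
    by apply: eq_bigr => j _; rewrite (iterB Alin) scalerBr.
  apply: le_trans (hn_sum Hip _ _) _.
  apply: (@le_trans _ _ (series (exp_coeff p) N * hn (S A b N f - E b f))).
    rewrite series_ord mulr_suml; apply: ler_sum => j _; exact: (term_bound Hip K0 HK).
  apply: ler_wpM2r; first exact: hn_ge0.
  by apply: exp_series_le; apply: mulr_ge0.
have hCD N : hn (S A (a + b) N f - D N) <=
   (series (exp_coeff p) N * series (exp_coeff q) N - series (exp_coeff (p + q)) N) * hn f.
  rewrite -(hnB Hip) /D D_expand C_expand square_minus_triangle -tail_real mulr_suml.
  apply: le_trans (hn_sum Hip _ _) _; apply: ler_sum => j _.
  rewrite mulr_suml; apply: le_trans (hn_sum Hip _ _) _; apply: ler_sum => k _.
  exact: Hjk_bound.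
apply: (hcvg_unique Hip (HS HE (a + b) f)).
apply: (@hcvg_bound _ _ _ _ _
   (fun N => (series (exp_coeff p) N * series (exp_coeff q) N - series (exp_coeff (p + q)) N) * hn f
     + expR p * hn (S A b N f - E b f) + hn (X N - L))).
  move=> N; apply: le_trans (hn_tri Hip _ (D N) _) _.
  rewrite -addrA; apply: lerD; first exact: hCD.
  apply: le_trans (hn_tri Hip _ (X N) _) _; apply: lerD => //; exact: hDX.
have h1 : (fun N => (series (exp_coeff p) N * series (exp_coeff q) N - series (exp_coeff (p + q)) N) * hn f)
    @ \oo --> (0:R).
  have := cvg_scalr (c := hn f) (cvg_sub (cvg_mul (exp_series_cvg (x:=p)) (exp_series_cvg (x:=q))) (exp_series_cvg (x:=p + q))).
  by rewrite expRD subrr mul0r.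
have h2 := cvg_scal (c := expR p) (iffLR (hcvgP ip _ _) (HS HE b f)).
have h3 := iffLR (hcvgP ip _ _) hX.
have := cvg_add (cvg_add h1 h2) h3.
by rewrite mulr0 !addr0.
Qed.

Lemma E_cont_bound t t0 g :
  hn (E t g - E t0 g) <= expR (`|t0| * K) * ((expR (`|t - t0| * K) - 1) * hn g).
Proof.
have -> : E t g = E t0 (E (t - t0) g) by rewrite -E_semigroup addrC subrK.
rewrite -(EB Hip Alin HE).
apply: le_trans (E_bound Hip K0 HK HE _ _) _.
apply: ler_wpM2l; first exact: expR_ge0.
exact: (E_sub_id Hip K0 HK HE).
Qed.

End Semi.
Local Open Scope complex_scope.

Lemma cont_lip (R : realType) (f : R -> R) t0 (M : R) :
  (forall t, `|t - t0| <= 1 -> `|f t - f t0| <= M * `|t - t0|) -> {for t0, continuous f}.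
Proof.
move=> h; apply/cvgrPdist_lt => e e0.
have M1 : 0 < `|M| + 1 by apply: ltr_pwDr => //; exact: normr_ge0.
set d := Num.min 1 (e / (`|M| + 1)).
have d0 : 0 < d by rewrite lt_min ltr01 divr_gt0.
exists d => // t /=.
rewrite lt_min => /andP[h1 h2].
rewrite distrC; apply: le_lt_trans (h t _) _.
  by rewrite distrC; apply: ltW.
move: h2; rewrite distrC ltr_pdivlMr // mulrC => h2.
apply: le_lt_trans h2; rewrite mulrDl mul1r.
apply: le_trans (ler_wpM2r (normr_ge0 _) (ler_norm M)) _.
by rewrite lerDl normr_ge0.
Qed.

Lemma expR_sub1_le (R : realType) (x c : R) : 0 <= x -> x <= c -> expR x - 1 <= x * expR c.
Proof.
move=> x0 xc.
have h := expR_ge1Dx (- x).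
have e1 : expR x * expR (- x) = 1 by rewrite -expRD subrr expR0.
have h2 : expR x - 1 <= x * expR x.
  have hx : 0 < expR x := expR_gt0 x.
  have : expR x * (1 + - x) <= expR x * expR (- x) by apply: ler_wpM2l => //; exact: ltW.
  rewrite e1; nra.
apply: le_trans h2 _; apply: ler_wpM2l => //; by rewrite ler_expR.
Qed.

Lemma abs_Re_le (R : realType) (z : R[i]) : `|complex.Re z| <= cnorm z.
Proof.
rewrite /cnorm -sqrtr_sqr; apply: ler_wsqrtr.
rewrite /cabs2; have := sqr_ge0 (complex.Im z); lra.
Qed.
Lemma abs_Im_le (R : realType) (z : R[i]) : `|complex.Im z| <= cnorm z.
Proof.
rewrite /cnorm -sqrtr_sqr; apply: ler_wsqrtr.
rewrite /cabs2; have := sqr_ge0 (complex.Re z); lra.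
Qed.

Section Cont.
Variable R : realType.
Variable V : lmodType R[i].
Variable ip : V -> V -> R[i].
Hypothesis Hip : is_inner_product ip.
Local Notation hn := (hnorm ip).
Variable A : V -> V.
Variable K : R.
Hypothesis K0 : 0 <= K.
Hypothesis HK : forall x, hn (A x) <= K * hn x.
Hypothesis Alin : forall a x y, A (a *: x + y) = a *: A x + A y.
Variable E : R -> V -> V.
Hypothesis HE : is_operator_exp ip A E.

Lemma ip_E_lip f g t0 t : `|t - t0| <= 1 ->
  cnorm (ip f (E t g) - ip f (E t0 g)) <=
  (hn f * expR (`|t0| * K) * hn g * (K * expR K)) * `|t - t0|.
Proof.
move=> h1.
rewrite -(ipBr Hip); apply: le_trans (cnorm_ip Hip _ _) _.
have hE := E_cont_bound Hip K0 HK Alin HE t t0 g.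
have hx : expR (`|t - t0| * K) - 1 <= `|t - t0| * K * expR K.
  apply: expR_sub1_le; first by apply: mulr_ge0.
  by rewrite -{2}[K]mul1r; apply: ler_wpM2r.
have hf := hn_ge0 ip f; have hg := hn_ge0 ip g; have he := expR_ge0 (`|t0| * K).
apply: le_trans (ler_wpM2l hf hE) _.
have : expR (`|t0| * K) * ((expR (`|t - t0| * K) - 1) * hn g) <=
       expR (`|t0| * K) * ((`|t - t0| * K * expR K) * hn g).
  by apply: ler_wpM2l => //; apply: ler_wpM2r.
move=> h2; apply: le_trans (ler_wpM2l hf h2) _.
by rewrite le_eqVlt; apply/orP; left; apply/eqP; ring.
Qed.

Lemma ip_E_cont f g : continuous (fun t => cabs2 (ip f (E t g))).
Proof.
move=> t0.
set M := hn f * expR (`|t0| * K) * hn g * (K * expR K).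
have hr : {for t0, continuous (fun t => complex.Re (ip f (E t g)))}.
  apply: (cont_lip (M := M)) => t h1.
  apply: le_trans _ (ip_E_lip f g h1).
  apply: le_trans _ (abs_Re_le _).
  by case: (ip f (E t g)) => ? ?; case: (ip f (E t0 g)) => ? ?.
have hi : {for t0, continuous (fun t => complex.Im (ip f (E t g)))}.
  apply: (cont_lip (M := M)) => t h1.
  apply: le_trans _ (ip_E_lip f g h1).
  apply: le_trans _ (abs_Im_le _).
  by case: (ip f (E t g)) => ? ?; case: (ip f (E t0 g)) => ? ?.
have := continuousD (continuousM hr hr) (continuousM hi hi).
have -> : (fun t => cabs2 (ip f (E t g))) =
   ((fun t => complex.Re (ip f (E t g))) \* (fun t => complex.Re (ip f (E t g)))) +
   ((fun t => complex.Im (ip f (E t g))) \* (fun t => complex.Im (ip f (E t g)))).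
  by apply: funext => t; rewrite /cabs2 /= !expr2.
by [].
Qed.

End Cont.
Local Open Scope complex_scope.

Lemma small_inv (R : realType) (e : R) : 0 < e ->
  exists N : nat, forall n, (N <= n)%N -> (n.+1%:R)^-1 < e.
Proof.
move=> e0; have ei : 0 <= e^-1 by rewrite invr_ge0 ltW.
exists (Num.Def.archi_bound e^-1) => n hn.
have h1 := archi_boundP ei.
have h2 : (Num.Def.archi_bound e^-1)%:R <= n.+1%:R :> R by rewrite ler_nat; apply: leqW.
rewrite -[e]invrK ltf_pV2 ?posrE ?invr_gt0 ?ltr0Sn //.
exact: lt_le_trans h1 h2.
Qed.

Lemma cabs2_eq0 (R : realType) (z : R[i]) : cabs2 z = 0 -> z = 0.
Proof.
rewrite /cabs2; case: z => a b /= h.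
have ha : a ^+ 2 = 0 by have := sqr_ge0 a; have := sqr_ge0 b; lra.
have hb : b ^+ 2 = 0 by have := sqr_ge0 a; have := sqr_ge0 b; lra.
move/eqP: ha; rewrite sqrf_eq0 => /eqP ->; move/eqP: hb; rewrite sqrf_eq0 => /eqP ->.
by [].
Qed.

Lemma cnorm_eq0 (R : realType) (z : R[i]) : cnorm z = 0 -> z = 0.
Proof.
move=> /eqP; rewrite /cnorm sqrtr_eq0 => h; apply: cabs2_eq0.
by apply/eqP; rewrite eq_le h cabs2_ge0.
Qed.

Section Riesz.
Variable R : realType.
Variable V : lmodType R[i].
Variable ip : V -> V -> R[i].
Hypothesis Hip : is_inner_product ip.
Hypothesis Hcomp : hcomplete ip.
Local Notation hn := (hnorm ip).

Lemma n2N x : n2 ip (- x) = n2 ip x.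
Proof. by rewrite -!(hn_sqr Hip) (hnN Hip). Qed.

Lemma parallelogram x y : n2 ip (x - y) + n2 ip (x + y) = 2 * n2 ip x + 2 * n2 ip y.
Proof.
rewrite !(n2D Hip) n2N (ipNr Hip).
case: (ip x y) => a b /=; ring.
Qed.

Lemma sqr_le (a b : R) : 0 <= a -> a <= b -> a ^+ 2 <= b ^+ 2.
Proof. move=> a0 ab; rewrite ler_pXn2r // ?nnegrE //; exact: le_trans ab. Qed.

Variable phi : V -> R[i].
Variable B : R.
Hypothesis philin : forall a x y, phi (a *: x + y) = a * phi x + phi y.
Hypothesis phib : forall x, cnorm (phi x) <= B * hn x.

Lemma phi0 : phi 0 = 0.
Proof.
have := philin 1 0 0; rewrite scaler0 addr0 mul1r => h.
by have := congr1 (fun w => w - phi 0) h; rewrite subrr addrK.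
Qed.
Lemma phiZ a x : phi (a *: x) = a * phi x.
Proof. by rewrite -[a *: x]addr0 philin phi0 addr0. Qed.
Lemma phiD x y : phi (x + y) = phi x + phi y.
Proof. by rewrite -[x]scale1r philin mul1r scale1r. Qed.
Lemma phiB x y : phi (x - y) = phi x - phi y.
Proof. by rewrite phiD -scaleN1r phiZ mulN1r. Qed.

Lemma riesz : exists u, forall h, phi h = ip h u.
Proof.
case: (pselect (exists x0, phi x0 <> 0)) => [[x0 hx0]|hz]; last first.
  exists 0 => h; rewrite (ip0r Hip).
  by case: (pselect (phi h = 0)) => // hh; exfalso; apply: hz; exists h.
set z0 := (phi x0)^-1 *: x0.
have hz0 : phi z0 = 1 by rewrite phiZ mulVf //; apply/eqP.
pose Hs := [set r : R | exists h, phi h = 1 /\ r = hn h].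
have Hs_inf : has_inf Hs.
  split; first by exists (hn z0), z0.
  by exists 0 => r [h [_ ->]]; exact: hn_ge0.
set d := inf Hs.
have d0 : 0 <= d.
  apply: lb_le_inf; first by exists (hn z0), z0.
  by move=> r [h [_ ->]]; exact: hn_ge0.
have dle h : phi h = 1 -> d <= hn h.
  move=> ph; apply: (ge_inf Hs_inf.2); by exists h.
have adh n : exists h, phi h = 1 /\ hn h < d + (n.+1%:R)^-1.
  have ep : 0 < (n.+1%:R : R)^-1 by rewrite invr_gt0 ltr0Sn.
  have [r [h [ph ->]] hr] := inf_adherent ep Hs_inf.
  by exists h.
have [hs hhs] := choice adh.
have sqd n : n2 ip (hs n) - d ^+ 2 <= (2 * d + 1) * (n.+1%:R)^-1.
  have [ph hl] := hhs n.
  have e0 : 0 < (n.+1%:R : R)^-1 by rewrite invr_gt0 ltr0Sn.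
  have e1 : (n.+1%:R : R)^-1 <= 1 by rewrite invf_le1 ?ltr0Sn // ler1n.
  rewrite -(hn_sqr Hip).
  have hn0 := hn_ge0 ip (hs n).
  have := sqr_le hn0 (ltW hl); rewrite sqrrD.
  set ee := (n.+1%:R : R)^-1 in e0 e1 *.
  have : ee ^+ 2 <= ee by rewrite expr2; nra.
  nra.
have mid m n : 4 * d ^+ 2 <= n2 ip (hs m + hs n).
  have ph : phi ((2%:R^-1)%:C *: (hs m + hs n)) = 1.
    rewrite phiZ phiD (hhs m).1 (hhs n).1.
    by apply/eqP; rewrite eq_complex /=; apply/andP; split; apply/eqP; field.
  have := dle _ ph; rewrite (hnZR Hip) => h.
  have := sqr_le d0 h; rewrite exprMn (hn_sqr Hip) ger0_norm ?invr_ge0 ?ler0n //.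
  move=> h2; have h3 : (2%:R^-1 : R) ^+ 2 = 4^-1 by rewrite exprVn expr2 -natrM.
  rewrite h3 in h2; have := n2_ge0 Hip (hs m + hs n); nra.
have cauchy_est m n : n2 ip (hs m - hs n) <=
    2 * (2 * d + 1) * ((m.+1%:R)^-1 + (n.+1%:R)^-1).
  have -> : 2 * (2 * d + 1) * ((m.+1%:R)^-1 + (n.+1%:R)^-1) =
     2 * ((2 * d + 1) / m.+1%:R) + 2 * ((2 * d + 1) / n.+1%:R) by ring.
  have := parallelogram (hs m) (hs n); have := mid m n; have := sqd m; have := sqd n.
  move=> a b c e; move: a b; set u := (2 * d + 1) / m.+1%:R; set v := (2 * d + 1) / n.+1%:R; move=> a b; lra.
have hcau : hcauchy ip hs.
  move=> e e0.
  have c0 : 0 < 4 * (2 * d + 1) by apply: mulr_gt0 => //; apply: ltr_pwDr => //; apply: mulr_ge0.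
  have [N HN] := small_inv (divr_gt0 (exprn_gt0 2 e0) c0).
  exists N => m n hm hn.
  have h1 := HN m hm; have h2 := HN n hn.
  have := cauchy_est m n.
  set a := (m.+1%:R : R)^-1 in h1 *; set b := (n.+1%:R : R)^-1 in h2 *.
  move=> hc.
  have hlt : n2 ip (hs m - hs n) < e ^+ 2.
    apply: le_lt_trans hc _.
    move: h1 h2; rewrite !ltr_pdivlMr // => h1 h2.
    have : 2 * (2 * d + 1) * (a + b) = (a * (4 * (2 * d + 1)) + b * (4 * (2 * d + 1))) / 2.
      by field.
    move=> ->; rewrite ltr_pdivrMr //; lra.
  rewrite hnE -(ger0_norm (ltW e0)) -sqrtr_sqr ltr_sqrt //.
  by rewrite exprn_gt0 // normr_gt0 gt_eqF.
have [h0 hh0] := Hcomp hcau.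
have ph0 : phi h0 = 1.
  apply/eqP; rewrite -subr_eq0; apply/eqP; apply: cnorm_eq0.
  apply/eqP; rewrite eq_le cnorm_ge0 andbT; apply: le0_all => e e0.
  have Bp : 0 < `|B| + 1 by apply: ltr_pwDr => //; exact: normr_ge0.
  have [N HN] := hh0 _ (divr_gt0 e0 Bp).
  have := HN N (leqnn N); rewrite (hnB Hip) => hN.
  rewrite -(hhs N).1 -phiB; apply: le_trans (phib _) _.
  apply: le_trans (ler_wpM2r (hn_ge0 _ _) (ler_norm B)) _.
  move: hN; rewrite ltr_pdivlMr // => hN.
  have := hn_ge0 ip (h0 - hs N); have := normr_ge0 B; nra.
have h0le : hn h0 <= d.
  rewrite -subr_le0; apply: le0_all => e e0.
  have e2 : 0 < e / 2 by apply: divr_gt0.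
  have [N1 HN1] := hh0 _ e2; have [N2 HN2] := small_inv e2.
  set n := maxn N1 N2.
  have a1 := HN1 n (leq_maxl _ _); have a2 := HN2 n (leq_maxr _ _).
  have a3 := (hhs n).2.
  have := hnD Hip (hs n) (h0 - hs n); rewrite addrC subrK (hnB Hip h0) => a4.
  move: a2 a3; set w := (n.+1%:R : R)^-1 => a2 a3; lra.
have hmin h : phi h = 1 -> n2 ip h0 <= n2 ip h.
  move=> ph; rewrite -!(hn_sqr Hip); apply: sqr_le; first exact: hn_ge0.
  exact: le_trans h0le (dle _ ph).
have orth k : phi k = 0 -> ip h0 k = 0.
  move=> pk; set z := ip h0 k.
  set t := (n2 ip k + 1)^-1.
  have t0 : 0 < t by rewrite invr_gt0; apply: ltr_pwDr => //; exact: n2_ge0.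
  have tk : t * n2 ip k < 1.
    rewrite ltr_pdivrMl ?mulr1; first lra.
    by apply: ltr_pwDr => //; exact: n2_ge0.
  have := hmin (h0 - (t%:C * z) *: k).
  rewrite phiB phiZ pk mulr0 subr0 => /(_ ph0).
  rewrite (n2B_gen Hip) -/z.
  have -> : complex.Re (conjc (t%:C * z) * z) = t * cabs2 z.
    rewrite /cabs2; case: z => p q /=; rewrite !mul0r !subr0 !addr0; ring.
  have -> : cabs2 (t%:C * z) = t ^+ 2 * cabs2 z.
    rewrite /cabs2; case: z => p q /=; rewrite !mul0r !subr0 !addr0; ring.
  move=> h; apply: cabs2_eq0.
  have c0 := cabs2_ge0 z.
  apply/eqP; rewrite eq_le c0 andbT.
  have : t * cabs2 z * (2 - t * n2 ip k) <= 0 by nra.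
  move=> h2; rewrite leNgt; apply/negP => cp.
  have : 0 < t * cabs2 z * (2 - t * n2 ip k) by apply: mulr_gt0; [apply: mulr_gt0|lra].
  lra.
have h0n0 : n2 ip h0 != 0.
  apply/negP => /eqP /(n2_eq0 Hip) e; move: ph0; rewrite e phi0 => /eqP.
  by rewrite eq_sym oner_eq0.
exists (((n2 ip h0)^-1)%:C *: h0) => h.
have pk : phi (h - phi h *: h0) = 0 by rewrite phiB phiZ ph0 mulr1 subrr.
have := orth _ pk; rewrite (ipBr Hip) (ipZr Hip) (ipxx Hip) => /eqP; rewrite subr_eq0 => /eqP e.
rewrite (ipZr Hip) conjc_real (ipC Hip) e conjcM (conjcK' (phi h)) conjc_real.
by rewrite mulrCA -rmorphM mulVf // mulr1.
Qed.

End Riesz.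

Section Shift.
Variable R : realType.
Local Notation mu := (@lebesgue_measure R).

Lemma shift_integral (G : R -> R) (s L : R) : 0 <= L -> continuous G ->
  (\int[mu]_(x in `[s, (s + L)%R]) (G x)%:E =
   \int[mu]_(x in `[0%R, L]) (G (x + s)%R)%:E)%E.
Proof.
move=> L0 cG.
pose F := fun x : R => x + s.
have FE : F = (id + cst s)%R by apply: funext => x.
have dF : F^`() = cst 1.
  apply: funext => x; rewrite derive1E FE deriveD; last 2 first.
  - exact: derivable_id.
  - exact: derivable_cst.
  by rewrite derive_id derive_cst addr0.
have cF : continuous F.
  by move=> x; rewrite FE; apply: continuousD => //; apply: cst_continuous.
have := @integration_by_substitution_increasing R F G 0 L L0.
rewrite dF /F add0r [L + s]addrC => ->.
- by apply: eq_integral => x _; rewrite /= mulr1.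
- by move=> x y _ _ xy; rewrite ltrD2r.
- by move=> x _; apply: cst_continuous.
- exact: is_cvg_cst.
- exact: is_cvg_cst.
- split.
  + move=> x _; rewrite -/F FE; apply: derivableD; [exact: derivable_id|exact: derivable_cst].
  + exact: cvg_at_right_filter (cF 0).
  + exact: cvg_at_left_filter (cF L).
- exact: continuous_subspaceT.
Qed.

End Shift.

Section DatkoInt.
Variable R : realType.
Local Notation mu := (@lebesgue_measure R).
Variable T : choiceType.
Variable G : set T.
Variable Phi : T -> T -> R -> R.
Variable adj : R -> T -> T.
Variable nf : T -> R.
Variables c C L : R.
Hypothesis L0 : 0 < L.
Hypothesis Phi_ge0 : forall f g t, 0 <= Phi f g t.
Hypothesis Phi_cont : forall f g, continuous (Phi f g).
Hypothesis Phi_shift : forall s f g t, Phi (adj s f) g t = Phi f g (t + s).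
Hypothesis Hfr : forall f,
  ((c * nf f)%:E <= \esum_(g in G) \int[mu]_(t in `[0%R, L]) (Phi f g t)%:E)%E.
Hypothesis Hint : forall f,
  (\esum_(g in G) \int[mu]_(t in `[0%R, +oo[) (Phi f g t)%:E <= (C * nf f)%:E)%E.

Lemma Phi_meas f g (D : set R) : measurable_fun D (fun t => (Phi f g t)%:E).
Proof.
have h : measurable_fun setT (EFin \o Phi f g).
  by apply/measurable_EFinP; exact: continuous_measurable_fun.
exact: measurable_funS h.
Qed.

Lemma datko_key n f :
  ((\sum_(k < n) c * nf (adj (k%:R * L) f))%:E <=
   \esum_(g in G) \int[mu]_(t in `[0%R, (n%:R * L)%R[) (Phi f g t)%:E)%E.
Proof.
elim: n => [|n IH].
  rewrite big_ord0; apply: esum_ge0 => g _; apply: integral_ge0 => t _.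
  by rewrite lee_fin.
rewrite big_ord_recr /= EFinD.
have split_set : `[0%R, (n.+1%:R * L)%R[ =
    `[0%R, (n%:R * L)%R[ `|` `[(n%:R * L)%R, (n.+1%:R * L)%R[ :> set R.
  apply: itv_bndbnd_setU; rewrite bnd_simp.
    by apply: mulr_ge0 => //; exact: ltW.
  by apply: ler_wpM2r; [exact: ltW|rewrite ler_nat].
have -> : (\esum_(g in G) \int[mu]_(t in `[0%R, (n.+1%:R * L)%R[) (Phi f g t)%:E =
  \esum_(g in G) \int[mu]_(t in `[0%R, (n%:R * L)%R[) (Phi f g t)%:E +
  \esum_(g in G) \int[mu]_(t in `[(n%:R * L)%R, (n.+1%:R * L)%R[) (Phi f g t)%:E)%E.
  rewrite -esumD; last 2 first.
  - by move=> g _; apply: integral_ge0 => t _; rewrite lee_fin.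
  - by move=> g _; apply: integral_ge0 => t _; rewrite lee_fin.
  apply: eq_esum => g _; rewrite split_set ge0_integral_setU //.
  - exact: Phi_meas.
  - by move=> t _; rewrite lee_fin.
  - apply/disj_setPS => t [] /=; rewrite !in_itv /= => /andP[_ h1] /andP[h2 _].
    by move: (lt_le_trans h1 h2); rewrite ltxx.
apply: leeD => //.
apply: le_trans (Hfr _) _.
apply: le_esum => g _.
have -> : (\int[mu]_(t in `[0%R, L]) (Phi (adj (n%:R * L) f) g t)%:E =
          \int[mu]_(t in `[0%R, L]) (Phi f g (t + n%:R * L)%R)%:E)%E.
  by apply: eq_integral => t _; rewrite Phi_shift.
rewrite -shift_integral //; last exact: ltW.
rewrite -integral_itv_bndo_bndc; last exact: Phi_meas.
by rewrite -[n.+1%:R * L]/((n.+1)%:R * L)%R mulrSr mulrDl mul1r.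
Qed.

Lemma datko_int n f : \sum_(k < n) c * nf (adj (k%:R * L) f) <= C * nf f.
Proof.
rewrite -lee_fin; apply: le_trans (datko_key n f) _.
apply: le_trans (Hint f).
apply: le_esum => g _.
apply: ge0_subset_integral => //; first exact: Phi_meas.
- by move=> t _; rewrite lee_fin.
- move=> t /=; rewrite !in_itv /= => /andP[h _]; by rewrite h.
Qed.

End DatkoInt.
Local Open Scope complex_scope.

Lemma datko_abstract (R : realType) (T : Type) (adj : R -> T -> T) (nf : T -> R) (L c C : R) :
  0 < c -> (forall f, 0 <= nf f) ->
  (forall n f, \sum_(k < n) c * nf (adj (k%:R * L) f) <= C * nf f) ->
  (forall n k f, (k <= n)%N ->
     adj (n%:R * L) f = adj ((n - k)%N%:R * L) (adj (k%:R * L) f)) ->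
  exists N : nat, (0 < N)%N /\ forall f, nf (adj (N%:R * L) f) <= nf f / 4.
Proof.
move=> c0 nf0 hsum hcomp.
set M3 := `|C / c|.
have M30 : 0 <= M3 by exact: normr_ge0.
have sumb n f : \sum_(k < n) nf (adj (k%:R * L) f) <= M3 * nf f.
  have := hsum n f; rewrite -mulr_sumr => h.
  apply: (@le_trans _ _ (C / c * nf f)); last first.
    by apply: ler_wpM2r; [exact: nf0|exact: ler_norm].
  by rewrite mulrAC ler_pdivlMr // mulrC.
have single k y : nf (adj (k%:R * L) y) <= M3 * nf y.
  have := sumb k.+1 y; rewrite big_ord_recr /=.
  have : 0 <= \sum_(i < k) nf (adj (i%:R * L) y) by apply: sumr_ge0 => i _; exact: nf0.
  lra.
have nbound n f : n%:R * nf (adj (n%:R * L) f) <= M3 ^+ 2 * nf f.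
  have : \sum_(k < n) nf (adj (n%:R * L) f) <= \sum_(k < n) M3 * nf (adj (k%:R * L) f).
    apply: ler_sum => k _; rewrite (hcomp n k f); last exact: ltnW.
    exact: single.
  rewrite sumr_const card_ord -mulr_sumr => h; rewrite mulr_natl.
  apply: le_trans h _; rewrite expr2 -mulrA; apply: ler_wpM2l => //; exact: sumb.
set N := (Num.Def.archi_bound (4 * M3 ^+ 2)).+1.
exists N; split => // f.
have hN : 4 * M3 ^+ 2 < N%:R.
  apply: lt_le_trans (archi_boundP _) _; first by apply: mulr_ge0 => //; exact: sqr_ge0.
  by rewrite ler_nat.
have := nbound N f; have := nf0 f; have := nf0 (adj (N%:R * L) f).
set x := nf (adj (N%:R * L) f); set y := nf f; set m := M3 ^+ 2.
move=> x0 y0 h.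
have Np : 0 < N%:R :> R by rewrite ltr0n.
rewrite ler_pdivlMr //.
have : 4 * (N%:R * x) <= 4 * (m * y) by rewrite ler_pM2l.
have : (4 * m) * y <= N%:R * y by apply: ler_wpM2r => //; exact: ltW.
nra.
Qed.

Section AdjE.
Variable R : realType.
Variable V : lmodType R[i].
Variable ip : V -> V -> R[i].
Hypothesis Hip : is_inner_product ip.
Local Notation hn := (hnorm ip).
Variable E : R -> V -> V.
Variable adj : R -> V -> V.
Hypothesis Hadj : forall s f h, ip (adj s f) h = ip f (E s h).

Lemma ip_ext u v : (forall h, ip u h = ip v h) -> u = v.
Proof.
move=> e; apply/eqP; rewrite -subr_eq0; apply/eqP; apply: (ip_def Hip).
by rewrite (ipBl Hip) e subrr.
Qed.

Lemma adj_to_E s q : 0 <= q -> (forall y, hn (adj s y) <= q * hn y) ->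
  forall x, hn (E s x) <= q * hn x.
Proof.
move=> q0 hq x; set y := E s x.
have h1 : hn y ^+ 2 <= q * hn y * hn x.
  rewrite (hn_sqr Hip) /n2 {2}/y -Hadj.
  apply: le_trans (Re_ip_le Hip _ _) _; apply: ler_wpM2r; first exact: hn_ge0.
  exact: hq.
have [y0|yp] := eqVneq (hn y) 0.
  by rewrite y0; apply: mulr_ge0 => //; exact: hn_ge0.
have ypos : 0 < hn y by rewrite lt_def yp hn_ge0.
have h2 : hn y * hn y <= hn y * (q * hn x).
  have -> : hn y * (q * hn x) = q * hn y * hn x by ring.
  by rewrite -expr2.
by rewrite -(ler_pM2l ypos).
Qed.

End AdjE.
Local Open Scope complex_scope.

Lemma half_pow_le (R : realType) (t T : R) (m : nat) : 0 < T -> t / T < m.+1%:R ->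
  (2^-1) ^+ m <= 2 * expR (- ln 2 / T * t).
Proof.
move=> T0 hm.
have l2 : 0 < ln (2 : R) by apply: ln_gt0; rewrite ltr1n.
have e2 : expR (- ln (2:R)) = 2^-1.
  by rewrite expRN lnK // posrE ltr0n.
have h1 : - ln 2 * (m.+1)%:R <= - ln 2 / T * t.
  have -> : - ln 2 / T * t = - (ln 2 * (t / T)) by ring.
  rewrite mulNr lerN2; apply: ler_wpM2l; [exact: ltW|exact: ltW].
have := h1; rewrite -ler_expR expRM_natr e2 exprS => h2.
have : 2 * (2^-1 * (2^-1) ^+ m) <= 2 * expR (- ln 2 / T * t) by rewrite ler_pM2l.
by rewrite mulrA divff ?mul1r // pnatr_eq0.
Qed.

Local Close Scope complex_scope.

Theorem mainTheorem4 (R : realType) (V : lmodType R[i]) (ip : V -> V -> R[i])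
  (HH : complex_separable_hilbert ip)
  (A : V -> V) (HA : bounded_operator ip A)
  (E : R -> V -> V) (HE : is_operator_exp ip A E)
  (G : set V) (HGc : countable G) (HGb : bessel_system ip G)
  (C : R) (HC : 0 < C)
  (Hint : forall f : V,
     (\esum_(g in G) \int[lebesgue_measure]_(t in `[0%R, +oo[) (cabs2 (ip f (E t g)))%:E
        <= (C * hnorm ip f ^+ 2)%:E)%E)
  (L : R) (HL : 0 < L)
  (Hframe : semi_continuous_frame ip E G `[0, L]) :
  exponentially_stable ip E.
Proof.
case: HH => Hip Hcomp _.
case: HA => Alin [K1 HK1].
set K := `|K1|.
have K0 : 0 <= K by exact: normr_ge0.
have HK : forall x, hnorm ip (A x) <= K * hnorm ip x.
  move=> x; apply: le_trans (HK1 x) _; apply: ler_wpM2r; [exact: hn_ge0|exact: ler_norm].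
have adjex : forall s f, exists u, forall h, ip u h = ip f (E s h).
  move=> s f.
  have hl : forall a x y, ip (E s (a *: x + y)) f = a * ip (E s x) f + ip (E s y) f.
    by move=> a x y; rewrite (E_lin Hip Alin HE) (ipLin Hip).
  have hb : forall x, cnorm (ip (E s x) f) <= (expR (`|s| * K) * hnorm ip f) * hnorm ip x.
    move=> x; apply: le_trans (cnorm_ip Hip _ _) _.
    rewrite mulrAC; apply: ler_wpM2r; first exact: hn_ge0.
    exact: (E_bound Hip K0 HK HE).
  have [u hu] := riesz Hip Hcomp hl hb.
  by exists u => h; rewrite (ipC Hip h u) -hu -(ipC Hip).
pose adj s := projT1 (choice (adjex s)).
have Hadj : forall s f h, ip (adj s f) h = ip f (E s h).
  by move=> s; exact: (projT2 (choice (adjex s))).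
have semi := E_semigroup Hip K0 HK Alin HE.
have adj_comp : forall a b f, adj (b + a) f = adj a (adj b f).
  move=> a b f; apply: (ip_ext Hip) => h; by rewrite !Hadj semi.
case: Hframe => c [C' [c0 C0 Hfr]].
have Phi_shift : forall s f g t,
    cabs2 (ip (adj s f) (E t g)) = cabs2 (ip f (E (t + s) g)).
  by move=> s f g t; rewrite Hadj -semi addrC.
have hsum := @datko_int R V G (fun f g t => cabs2 (ip f (E t g))) adj
   (fun f => hnorm ip f ^+ 2) c C L HL
   (fun f g t => cabs2_ge0 _) (fun f g => ip_E_cont Hip K0 HK Alin HE (f:=f) (g:=g))
   Phi_shift (fun f => (Hfr f).1) Hint.
have hcomp : forall n k f, (k <= n)%N ->
    adj (n%:R * L) f = adj ((n - k)%N%:R * L) (adj (k%:R * L) f).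
  by move=> n k f kn; rewrite -adj_comp -mulrDl -natrD subnKC.
have [N [N0 HN]] := datko_abstract c0 (fun f => sqr_ge0 _) hsum hcomp.
set T := N%:R * L.
have T0 : 0 < T by rewrite mulr_gt0 // ltr0n.
have hadjT : forall y, hnorm ip (adj T y) <= 2^-1 * hnorm ip y.
  move=> y; have h := HN y.
  have hy := hn_ge0 ip y; have ha := hn_ge0 ip (adj T y).
  rewrite -(@ler_pXn2r _ 2) ?nnegrE // ?mulr_ge0 ?invr_ge0 ?ler0n // exprMn.
  have -> : (2^-1 : R) ^+ 2 = 4^-1 by rewrite exprVn expr2 -natrM.
  by rewrite mulrC.
have hET : forall x, hnorm ip (E T x) <= 2^-1 * hnorm ip x.
  move=> x; apply: (adj_to_E Hip Hadj _ hadjT); by rewrite invr_ge0 ler0n.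
have hEm : forall m x, hnorm ip (E (m%:R * T) x) <= (2^-1) ^+ m * hnorm ip x.
  elim => [|m IH] x.
    rewrite mul0r expr0 mul1r; have := E_bound Hip K0 HK HE 0 x.
    by rewrite normr0 mul0r expR0 mul1r.
  rewrite exprS -mulrA -addn1 natrD mulrDl mul1r addrC semi.
  apply: le_trans (hET _) _; apply: ler_wpM2l; [by rewrite invr_ge0 ler0n|exact: IH].
exists (2 * expR (T * K)), (- ln 2 / T); split.
- have : 1 + T * K <= expR (T * K) := expR_ge1Dx _.
  have : 0 <= T * K by apply: mulr_ge0 => //; exact: ltW.
  lra.
- rewrite mulNr oppr_lt0 divr_gt0 //; apply: ln_gt0; by rewrite ltr1n.
move=> t t0 x.
have tT0 : 0 <= t / T by apply: divr_ge0 => //; exact: ltW.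
set m := Num.Def.trunc (t / T).
have /andP[hm1 hm2] := truncn_itv tT0; rewrite -/m in hm1 hm2.
set r := t - m%:R * T.
have r0 : 0 <= r by rewrite subr_ge0 -ler_pdivlMr.
have rT : r <= T.
  rewrite lerBlDr; move: hm2; rewrite ltr_pdivrMr // => h.
  by apply: ltW; move: h; rewrite -[m.+1]addn1 natrD mulrDl mul1r addrC.
have tE : t = r + m%:R * T by rewrite /r subrK.
rewrite {1}tE semi.
apply: le_trans (E_bound Hip K0 HK HE r _) _.
have hx := hn_ge0 ip x.
have e1 : expR (`|r| * K) <= expR (T * K).
  by rewrite ler_expR ger0_norm //; apply: ler_wpM2r.
have e2 := half_pow_le T0 hm2.
apply: (@le_trans _ _ (expR (T * K) * ((2^-1) ^+ m * hnorm ip x))).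
  apply: (@le_trans _ _ (expR (`|r| * K) * ((2^-1) ^+ m * hnorm ip x))).
    by apply: ler_wpM2l; [exact: expR_ge0|exact: hEm].
  apply: ler_wpM2r => //; apply: mulr_ge0 => //; apply: exprn_ge0; by rewrite invr_ge0 ler0n.
rewrite -mulrA [2 * _]mulrC -!mulrA; apply: ler_wpM2l; first exact: expR_ge0.
rewrite mulrA; apply: ler_wpM2r => //.
by rewrite mulrA.
Qed.
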